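(* Let $\mathcal{H}_A,\mathcal{H}_B$ be finite-dimensional Hilbert spaces, let $Q_A$ and $Q_B$ be Hermitian operators on $\mathcal{H}_A$ and $\mathcal{H}_B$ respectively, and let $O\neq 0$ be an operator on $\mathcal{H}_A\otimes\mathcal{H}_B$ satisfying $[Q_A\otimes\mathbb{1}+\mathbb{1}\otimes Q_B,\,O]=0$. Then there exists a symmetry-resolved operator Schmidt decomposition $$\frac{O}{\sqrt{\mathrm{Tr}(O^\dagger O)}}=\sum_q\sum_j\lambda_j^{(q)}\,O_{A,j}^{(q)}\otimes O_{B,j}^{(-q)},$$ where $q$ ranges over eigenvalues of the linear map $X\mapsto[Q_A,X]$ on $\mathrm{End}(\mathcal{H}_A)$, $\lambda_j^{(q)}\ge0$, $\mathrm{Tr}\big((O_{A,j}^{(q)})^\dagger O_{A,j'}^{(q')}\big)=\delta_{q,q'}\delta_{j,j'}$, $\mathrm{Tr}\big((O_{B,j}^{(q)})^\dagger O_{B,j'}^{(q')}\big)=\delta_{q,q'}\delta_{j,j'}$, and $[Q_A,O_{A,j}^{(q)}]=q\,O_{A,j}^{(q)}$, $[Q_B,O_{B,j}^{(q)}]=q\,O_{B,j}^{(q)}$. *)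

(* Defs.v *)
From mathcomp Require Export all_boot all_order all_algebra.
From mathcomp Require Export mxtens.
Set Implicit Arguments. Unset Strict Implicit. Unset Printing Implicit Defensive.
Import Order.TTheory GRing.Theory Num.Theory.
Local Open Scope ring_scope.

Definition adjmx (C : numClosedFieldType) (m n : nat) (A : 'M[C]_(m, n)) : 'M[C]_(n, m) :=
  (map_mx Num.conj A)^T.

Definition comm_op (C : numClosedFieldType) (n : nat) (X Y : 'M[C]_n) : 'M[C]_n :=
  X *m Y - Y *m X.

Definition hermitian (C : numClosedFieldType) (n : nat) (Q : 'M[C]_n) : Prop :=
  adjmx Q = Q.

Definition ad_eigenvalue (C : numClosedFieldType) (n : nat) (Q : 'M[C]_n) (q : C) : Prop :=
  exists X : 'M[C]_n, X != 0 /\ comm_op Q X = q *: X.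

(* Main.v *)
From mathcomp Require Import all_boot all_order all_algebra.
From mathcomp Require Import spectral sesquilinear.
From mathcomp Require Import ring.
Require Import Defs.
Import Order.TTheory GRing.Theory Num.Theory.
Local Open Scope ring_scope.
Set Implicit Arguments. Unset Strict Implicit. Unset Printing Implicit Defensive.

Section Helpers.
Variable C : numClosedFieldType.

Lemma sum_tens m n (F : 'I_(m * n) -> C) :
  \sum_k F k = \sum_i \sum_j F (mxtens_index (i, j)).
Proof.
rewrite pair_bigA /= (reindex (@mxtens_index m n)) /=.
  by apply: eq_bigr => -[i j].
by exists (@mxtens_unindex m n) => x _; rewrite ?mxtens_indexK ?mxtens_unindexK.
Qed.

Lemma sum_delta_l n (i : 'I_n) (F : 'I_n -> C) :
  \sum_j ((i == j)%:R * F j) = F i.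
Proof.
rewrite (bigD1 i) //= eqxx mul1r big1 ?addr0 // => j /negbTE.
by rewrite eq_sym => ->; rewrite mul0r.
Qed.

Lemma sum_delta_r n (i : 'I_n) (F : 'I_n -> C) :
  \sum_j (F j * (j == i)%:R) = F i.
Proof.
rewrite (bigD1 i) //= eqxx mulr1 big1 ?addr0 // => j /negbTE ->.
by rewrite mulr0.
Qed.

Lemma adjmxE m n (A : 'M[C]_(m, n)) : adjmx A = (A ^t* )%sesqui.
Proof. by rewrite /adjmx map_trmx. Qed.

Lemma adjmx_entry m n (A : 'M[C]_(m, n)) i j : adjmx A i j = (A j i)^*.
Proof. by rewrite !mxE. Qed.

Lemma adjmxK m n (A : 'M[C]_(m, n)) : adjmx (adjmx A) = A.
Proof. by apply/matrixP => i j; rewrite !adjmx_entry conjCK. Qed.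

Lemma adjmx_mul m n p (A : 'M[C]_(m, n)) (B : 'M[C]_(n, p)) :
  adjmx (A *m B) = adjmx B *m adjmx A.
Proof.
apply/matrixP => i j; rewrite adjmx_entry !mxE rmorph_sum; apply: eq_bigr => k _.
by rewrite !mxE rmorphM mulrC.
Qed.

Lemma adjmxN m n (A : 'M[C]_(m, n)) : adjmx (- A) = - adjmx A.
Proof. by apply/matrixP => i j; rewrite !mxE rmorphN. Qed.

Lemma adjmx_tr m n (A : 'M[C]_(m, n)) : adjmx (A^T) = (adjmx A)^T.
Proof. by apply/matrixP => i j; rewrite !mxE. Qed.


Local Notation ux a := (mxtens_unindex a).

Definition vecm m (X : 'M[C]_m) : 'rV[C]_(m * m) :=
  \row_a X (ux a).1 (ux a).2.
Definition unvec m (v : 'rV[C]_(m * m)) : 'M[C]_m :=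
  \matrix_(i, j) v 0 (mxtens_index (i, j)).

Lemma vecm_unvec m (v : 'rV[C]_(m * m)) : vecm (unvec v) = v.
Proof. by apply/rowP => a; rewrite !mxE -surjective_pairing mxtens_unindexK. Qed.

Lemma vecmE m (X : 'M[C]_m) i j : vecm X 0 (mxtens_index (i, j)) = X i j.
Proof. by rewrite mxE mxtens_indexK. Qed.

Lemma vecm_tr_inj m (X Y : 'M[C]_m) : (vecm X)^T = (vecm Y)^T -> X = Y.
Proof.
move=> /matrixP H; apply/matrixP => i j.
by have := H (mxtens_index (i, j)) 0; rewrite !mxE mxtens_indexK.
Qed.

Lemma vecmZ m c (X : 'M[C]_m) : vecm (c *: X) = c *: vecm X.
Proof. by apply/rowP => a; rewrite !mxE. Qed.

Lemma tr_vecm m (X Y : 'M[C]_m) :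
  \tr (adjmx X *m Y) = \sum_a (vecm X 0 a)^* * vecm Y 0 a.
Proof.
rewrite sum_tens /mxtrace exchange_big /=; apply: eq_bigr => i _.
rewrite !mxE; apply: eq_bigr => k _; by rewrite !mxE !mxtens_indexK.
Qed.

Definition adL m (Q : 'M[C]_m) : 'M[C]_(m * m) :=
  \matrix_(a, b) (Q (ux a).1 (ux b).1 * ((ux a).2 == (ux b).2)%:R
                  - ((ux a).1 == (ux b).1)%:R * Q (ux b).2 (ux a).2).

Lemma adL_vec m (Q X : 'M[C]_m) :
  (vecm (comm_op Q X))^T = adL Q *m (vecm X)^T.
Proof.
apply/matrixP => a z; rewrite ord1 {z}; case: (mxtens_indexP a) => i i'.
rewrite !mxE mxtens_indexK /= sum_tens /adL; symmetry.
transitivity (\sum_k \sum_j (Q i k * ((i' == j)%:R * X k j)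
      - (i == k)%:R * (Q j i' * X k j))).
  apply: eq_bigr => k _; apply: eq_bigr => j _.
  by rewrite !mxE !mxtens_indexK /=; ring.
rewrite [LHS](eq_bigr _ (fun k _ => sumrB _ _ _ _)).
rewrite sumrB; congr (_ - _).
  by apply: eq_bigr => k _; rewrite -mulr_sumr sum_delta_l.
rewrite exchange_big /=; apply: eq_bigr => j _.
by rewrite sum_delta_l mulrC.
Qed.

Lemma adL_herm m (Q : 'M[C]_m) : hermitian Q -> adjmx (adL Q) = adL Q.
Proof.
move=> hQ; apply/matrixP => a b; rewrite adjmx_entry !mxE rmorphB !rmorphM /=.
rewrite !conjC_nat -!(adjmx_entry Q) hQ [_ == (ux b).2]eq_sym.
by rewrite [(ux b).1 == _]eq_sym mulrC [in X in _ - X]mulrC.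
Qed.


Lemma scal1E n (i j : 'I_n) : (1%:M : 'M[C]_n) i j = (i == j)%:R.
Proof. by rewrite mxE. Qed.

Lemma tens_lmul m n (QA : 'M[C]_m) (QB : 'M[C]_n) (M : 'M[C]_(m * n)) i j y :
  ((QA *t 1%:M + 1%:M *t QB) *m M) (mxtens_index (i, j)) y =
  \sum_k QA i k * M (mxtens_index (k, j)) y
  + \sum_l QB j l * M (mxtens_index (i, l)) y.
Proof.
rewrite mxE sum_tens.
transitivity (\sum_k \sum_l (QA i k * ((j == l)%:R * M (mxtens_index (k, l)) y)
   + (i == k)%:R * (QB j l * M (mxtens_index (k, l)) y))).
  apply: eq_bigr => k _; apply: eq_bigr => l _.
  rewrite !mxE !mxtens_indexK /=; ring.
rewrite [LHS](eq_bigr _ (fun k _ => big_split _ _ _ _ _)) big_split /=; congr (_ + _).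
  by apply: eq_bigr => k _; rewrite -mulr_sumr sum_delta_l.
by rewrite exchange_big /=; apply: eq_bigr => l _; rewrite sum_delta_l.
Qed.

Lemma tens_rmul m n (QA : 'M[C]_m) (QB : 'M[C]_n) (M : 'M[C]_(m * n)) x i j :
  (M *m (QA *t 1%:M + 1%:M *t QB)) x (mxtens_index (i, j)) =
  \sum_k M x (mxtens_index (k, j)) * QA k i
  + \sum_l M x (mxtens_index (i, l)) * QB l j.
Proof.
rewrite mxE sum_tens.
transitivity (\sum_k \sum_l (QA k i * (M x (mxtens_index (k, l)) * (l == j)%:R)
   + (k == i)%:R * (M x (mxtens_index (k, l)) * QB l j))).
  apply: eq_bigr => k _; apply: eq_bigr => l _.
  rewrite !mxE !mxtens_indexK /=; ring.
rewrite [LHS](eq_bigr _ (fun k _ => big_split _ _ _ _ _)) big_split /=; congr (_ + _).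
  by apply: eq_bigr => k _; rewrite -mulr_sumr sum_delta_r mulrC.
rewrite exchange_big /=; apply: eq_bigr => l _.
rewrite (eq_bigr (fun k => M x (mxtens_index (k, l)) * QB l j * (k == i)%:R)).
  by rewrite sum_delta_r.
by move=> k _; rewrite mulrC.
Qed.

Lemma adL_lmul m p (Q : 'M[C]_m) (M : 'M[C]_(m * m, p)) i i' b :
  (adL Q *m M) (mxtens_index (i, i')) b =
  \sum_k Q i k * M (mxtens_index (k, i')) b
  - \sum_k M (mxtens_index (i, k)) b * Q k i'.
Proof.
rewrite mxE sum_tens /adL.
transitivity (\sum_k \sum_j (Q i k * ((i' == j)%:R * M (mxtens_index (k, j)) b)
      - (i == k)%:R * (M (mxtens_index (k, j)) b * Q j i'))).
  apply: eq_bigr => k _; apply: eq_bigr => j _.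
  by rewrite !mxE !mxtens_indexK /=; ring.
rewrite [LHS](eq_bigr _ (fun k _ => sumrB _ _ _ _)).
rewrite sumrB; congr (_ - _).
  by apply: eq_bigr => k _; rewrite -mulr_sumr sum_delta_l.
by rewrite exchange_big /=; apply: eq_bigr => j _; rewrite sum_delta_l.
Qed.

Lemma adL_rmulT m p (Q : 'M[C]_m) (M : 'M[C]_(p, m * m)) a j j' :
  (M *m (adL Q)^T) a (mxtens_index (j, j')) =
  \sum_l Q j l * M a (mxtens_index (l, j'))
  - \sum_l M a (mxtens_index (j, l)) * Q l j'.
Proof.
transitivity ((adL Q *m M^T) (mxtens_index (j, j')) a).
  by rewrite !mxE; apply: eq_bigr => c _; rewrite !mxE mulrC.
rewrite adL_lmul.
by congr (_ - _); apply: eq_bigr => k _; rewrite !mxE.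
Qed.

Definition resh m n (O : 'M[C]_(m * n)) : 'M[C]_(m * m, n * n) :=
  \matrix_(a, b) O (mxtens_index ((ux a).1, (ux b).1))
                   (mxtens_index ((ux a).2, (ux b).2)).

Lemma reshE m n (O : 'M[C]_(m * n)) i i' j j' :
  resh O (mxtens_index (i, i')) (mxtens_index (j, j')) =
  O (mxtens_index (i, j)) (mxtens_index (i', j')).
Proof. by rewrite mxE !mxtens_indexK. Qed.

Lemma resh_inj m n (O1 O2 : 'M[C]_(m * n)) : resh O1 = resh O2 -> O1 = O2.
Proof.
move=> /matrixP H; apply/matrixP => x y.
case: (mxtens_indexP x) => i j; case: (mxtens_indexP y) => i' j'.
by have := H (mxtens_index (i, i')) (mxtens_index (j, j')); rewrite !reshE.
Qed.

Lemma resh_tens m n (X : 'M[C]_m) (Y : 'M[C]_n) :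
  resh (X *t Y) = (vecm X)^T *m vecm Y.
Proof.
apply/matrixP => a b.
case: (mxtens_indexP a) => i i'; case: (mxtens_indexP b) => j j'.
by rewrite reshE tensmxE mxE big_ord1 !mxE !mxtens_indexK.
Qed.

Lemma reshZ m n c (O : 'M[C]_(m * n)) : resh (c *: O) = c *: resh O.
Proof. by apply/matrixP => a b; rewrite !mxE. Qed.

Lemma resh_sumZ m n k (l : 'I_k -> C) (M : 'I_k -> 'M[C]_(m * n)) :
  resh (\sum_i l i *: M i) = \sum_i l i *: resh (M i).
Proof.
apply/matrixP => a b; rewrite !mxE !summxE; apply: eq_bigr => i _.
by rewrite !mxE.
Qed.

Lemma mxsubE p r (A B : 'M[C]_(p, r)) x y : (A - B) x y = A x y - B x y.
Proof. by rewrite !mxE. Qed.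
Lemma mxoppE p r (A : 'M[C]_(p, r)) x y : (- A) x y = - A x y.
Proof. by rewrite !mxE. Qed.
Lemma mx0E p r x y : (0 : 'M[C]_(p, r)) x y = 0.
Proof. by rewrite !mxE. Qed.

Lemma comm_resh m n (QA : 'M[C]_m) (QB : 'M[C]_n) (O : 'M[C]_(m * n)) :
  comm_op (QA *t (1%:M : 'M[C]_n) + (1%:M : 'M[C]_m) *t QB) O = 0 ->
  adL QA *m resh O = - (resh O *m (adL QB)^T).
Proof.
move=> /matrixP hc; apply/matrixP => a b.
case: (mxtens_indexP a) => i i'; case: (mxtens_indexP b) => j j'.
have := hc (mxtens_index (i, j)) (mxtens_index (i', j')).
rewrite /comm_op mxsubE mx0E tens_lmul tens_rmul mxoppE.
rewrite adL_lmul adL_rmulT.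
move=> H.
under [X in X - _ = _]eq_bigr do rewrite reshE.
under [X in _ - X = _]eq_bigr do rewrite reshE.
under [X in _ = - (X - _)]eq_bigr do rewrite reshE.
under [X in _ = - (_ - X)]eq_bigr do rewrite reshE.
 apply/eqP; rewrite -addr_eq0 -subr_eq0; apply/eqP; rewrite -[RHS]H.
ring.
Qed.


Lemma herm_trig_diag n (D : 'M[C]_n) : adjmx D = D -> is_trig_mx D ->
  forall i j, i != j -> D i j = 0.
Proof.
move=> hD /is_trig_mxP tD i j; case: (ltngtP i j) => [lt|gt|/val_inj ->].
- by move=> _; rewrite tD.
- by move=> _; rewrite -hD adjmx_entry tD // conjC0.
- by rewrite eqxx.
Qed.

Lemma diag_mulr n p (A : 'M[C]_(p, n)) (D : 'M[C]_n) k :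
  (forall i j, i != j -> D i j = 0) -> col k (A *m D) = D k k *: col k A.
Proof.
move=> hD; apply/matrixP => x z; rewrite !mxE (bigD1 k) //= big1 ?addr0.
  by rewrite mulrC.
by move=> j /negbTE jk; rewrite hD ?mulr0 // jk.
Qed.

Lemma diag_mull n p (D : 'M[C]_n) (A : 'M[C]_(n, p)) k :
  (forall i j, i != j -> D i j = 0) -> row k (D *m A) = D k k *: row k A.
Proof.
move=> hD; apply/matrixP => z x; rewrite !mxE (bigD1 k) //= big1 ?addr0 //.
by move=> j /negbTE jk; rewrite hD ?mul0r // eq_sym jk.
Qed.

Lemma mulmx_colrow p q r (A : 'M[C]_(p, q)) (B : 'M[C]_(q, r)) :
  A *m B = \sum_k col k A *m row k B.
Proof.
apply/matrixP => x y; rewrite !mxE summxE; apply: eq_bigr => k _.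
by rewrite !mxE big_ord1 !mxE.
Qed.

Lemma tr_adj_ge0 p (O : 'M[C]_p) : 0 <= \tr (adjmx O *m O).
Proof.
rewrite /mxtrace sumr_ge0 // => i _; rewrite mxE sumr_ge0 // => k _.
by rewrite !mxE mulrC mul_conjC_ge0.
Qed.


Lemma col_mulr p q r (A : 'M[C]_(p, q)) (B : 'M[C]_(q, r)) k :
  col k (A *m B) = A *m col k B.
Proof. by apply/matrixP => x z; rewrite !mxE; apply: eq_bigr => j _; rewrite !mxE. Qed.

End Helpers.

Theorem proposition4 (C : numClosedFieldType) (m n : nat)
  (QA : 'M[C]_m) (QB : 'M[C]_n) (O : 'M[C]_(m * n))
  (hQA : hermitian QA) (hQB : hermitian QB) (hO : O != 0)
  (hcomm : comm_op (QA *t (1%:M : 'M[C]_n) + (1%:M : 'M[C]_m) *t QB) O = 0) :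
  exists (k : nat) (q lam : 'I_k -> C)
         (OA : 'I_k -> 'M[C]_m) (OB : 'I_k -> 'M[C]_n),
    (forall i, ad_eigenvalue QA (q i)) /\
        (forall i, 0 <= lam i) /\
        (forall i i', \tr (adjmx (OA i) *m OA i') = (i == i')%:R) /\
        (forall i i', \tr (adjmx (OB i) *m OB i') = (i == i')%:R) /\
        (forall i, comm_op QA (OA i) = q i *: OA i) /\
        (forall i, comm_op QB (OB i) = - q i *: OB i) /\
        (sqrtC (\tr (adjmx O *m O)))^-1 *: O
          = \sum_(i < k) lam i *: (OA i *t OB i).
Proof.
set R := resh O.
set LA := adL QA; set LB := adL QB.
have hLA : adjmx LA = LA by exact: adL_herm.
have hLB : adjmx LB = LB by exact: adL_herm.
have hc : LA *m R = - (R *m LB^T) by exact: comm_resh.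
set H := R *m adjmx R.
have hH : adjmx H = H by rewrite /H adjmx_mul adjmxK.
have e1 : adjmx R *m LA = - (LB^T *m adjmx R).
  by have := congr1 (@adjmx _ _ _) hc; rewrite adjmx_mul hLA adjmxN adjmx_mul adjmx_tr hLB.
have HL : H *m LA = LA *m H.
  by rewrite /H -mulmxA e1 mulmxA hc mulmxN mulNmx mulmxA.
have [P Pu /andP [tH tL]] := cotrigonalization2 HL.
have PP : P *m adjmx P = 1%:M by rewrite adjmxE; apply/unitarymxP.
have PPt : adjmx P *m P = 1%:M.
  by have := mulmxKtV (1%:M : 'M[C]_(m * m)) Pu erefl; rewrite mul1mx -adjmxE.
rewrite /similar_to conjymx // -adjmxE in tH.
rewrite /similar_to conjymx // -adjmxE in tL.
set DH := P *m H *m adjmx P in tH.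
set DL := P *m LA *m adjmx P in tL.
have hDH : adjmx DH = DH by rewrite /DH !adjmx_mul !adjmxK mulmxA.
have hDL : adjmx DL = DL by rewrite /DL !adjmx_mul adjmxK hLA mulmxA.
have dH := herm_trig_diag hDH tH.
have dL := herm_trig_diag hDL tL.
have ea : adjmx P *m DL = LA *m adjmx P.
  by rewrite /DL !mulmxA PPt mul1mx.
have eb : DL *m P = P *m LA.
  by rewrite /DL -!mulmxA PPt mulmx1.
set W := P *m R.
have eR : R = adjmx P *m W by rewrite /W mulmxA PPt mul1mx.
have eW : W *m adjmx W = DH by rewrite /W /DH /H adjmx_mul !mulmxA.
have dE k : DH k k = \sum_b W k b * (W k b)^*.
  by rewrite -eW mxE; apply: eq_bigr => b _; rewrite adjmx_entry.
have d_ge0 k : 0 <= DH k k.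
  by rewrite dE sumr_ge0 // => b _; exact: mul_conjC_ge0.
have W0 k : DH k k = 0 -> row k W = 0.
  rewrite dE => h; apply/rowP => b; rewrite mxE mx0E; apply/eqP.
  rewrite -mul_conjC_eq0; apply/eqP. apply: (psumr_eq0P _ h) => // b' _; exact: mul_conjC_ge0.
set S := [set k | DH k k != 0].
set c := (sqrtC (\tr (adjmx O *m O)))^-1.
have c_ge0 : 0 <= c by rewrite invr_ge0 sqrtC_ge0 tr_adj_ge0.
pose ka := fun i : 'I_#|S| => enum_val i.
have kaS i : DH (ka i) (ka i) != 0.
  by have := enum_valP i; rewrite inE.
pose lamk := fun k => sqrtC (DH k k).
have lam_ge0 k : 0 <= lamk k by rewrite sqrtC_ge0.
have lamS i : lamk (ka i) != 0 by rewrite sqrtC_eq0 kaS.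
have lam2 k : lamk k * lamk k = DH k k by rewrite -expr2 sqrtCK.
have kainj i i' : (ka i == ka i') = (i == i') by rewrite (inj_eq enum_val_inj).
pose OA := fun i => unvec (col (ka i) (adjmx P))^T.
pose OB := fun i => unvec ((lamk (ka i))^-1 *: row (ka i) W).
have vA i : (vecm (OA i))^T = col (ka i) (adjmx P) by rewrite vecm_unvec trmxK.
have hA i i' : \tr (adjmx (OA i) *m OA i') = (i == i')%:R.
  rewrite tr_vecm !vecm_unvec.
  transitivity ((P *m adjmx P) (ka i) (ka i')).
    by rewrite mxE; apply: eq_bigr => a _; rewrite !mxE conjCK.
  by rewrite PP scal1E kainj.
have hAe i : comm_op QA (OA i) = DL (ka i) (ka i) *: OA i.
  apply: vecm_tr_inj; rewrite adL_vec vecmZ linearZ /= vA.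
  by rewrite -col_mulr -ea diag_mulr.
have hAnz i : OA i != 0.
  apply/eqP => h; have := hA i i; rewrite h eqxx mulmx0 mxtrace0 => /eqP.
  by rewrite eq_sym oner_eq0.
have hB i i' : \tr (adjmx (OB i) *m OB i') = (i == i')%:R.
  rewrite tr_vecm !vecm_unvec.
  transitivity ((lamk (ka i))^-1 * (lamk (ka i'))^-1 * DH (ka i') (ka i)).
    rewrite -eW mxE mulr_sumr; apply: eq_bigr => b _.
    rewrite !mxE rmorphM /= geC0_conj ?invr_ge0 //; ring.
  have [<-|ne] := eqVneq i i'.
    by rewrite -lam2 mulrACA mulVf ?mulr1.
  by rewrite dH ?mulr0 ?(negbTE ne) // kainj eq_sym.
have hcT : LB *m R^T = - (R^T *m LA^T).
  have := congr1 trmx hc; rewrite trmx_mul linearN /= trmx_mul trmxK => ->.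
  by rewrite opprK.
have rk k : row k P *m LA = DL k k *: row k P.
  by rewrite -row_mul -eb diag_mull.
have key k : LB *m (row k W)^T = - DL k k *: (row k W)^T.
  rewrite /W row_mul [in LHS]trmx_mul mulmxA hcT mulNmx -mulmxA -[LA^T *m _]trmx_mul rk.
  by rewrite linearZ /= -scalemxAr scaleNr trmx_mul.
have hBe i : comm_op QB (OB i) = - DL (ka i) (ka i) *: OB i.
  apply: vecm_tr_inj; rewrite adL_vec vecmZ !vecm_unvec !linearZ /=.
  by rewrite key !scalerA mulrC.
exists #|S|, (fun i => DL (ka i) (ka i)), (fun i => c * lamk (ka i)), OA, OB.
split.
  by move=> i; exists (OA i); split; [exact: hAnz | exact: hAe].
split; first by move=> i; rewrite mulr_ge0.
do 4!(split => //).
apply: resh_inj; rewrite reshZ resh_sumZ.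
rewrite (eq_bigr (fun i => c *: (col (ka i) (adjmx P) *m row (ka i) W))); last first.
  move=> i _; rewrite resh_tens !vecm_unvec trmxK -scalemxAr scalerA.
  by rewrite mulfK.
rewrite -scaler_sumr; congr (_ *: _).
rewrite -(big_enum_val (A := [in S]) (fun k => col k (adjmx P) *m row k W)) big_mkcond /=.
rewrite -/R eR mulmx_colrow; apply: eq_bigr => k _.
case: ifP => // /negbT; rewrite !inE negbK => /eqP/W0 ->.
by rewrite mulmx0.
Qed.
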